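(* Fix any seed set $S\subseteq V$ and any two edge-probability vectors $\tilde p,p^*\in[0,1]^{|E|}$, with corresponding $\tilde\theta,\theta^*$ defined by $\theta(e)=-\ln(1-p(e))$. Let $(S_0=S,S_1,\dots,S_{n-1})$ be a random IC cascade generated under $p^*$, and let $(X_{j,u},Y_{j,u})_{1\le j\le J_u}$ be the data pairs of node $u$ obtained from it by the economical construction. Then $$|\sigma(S,\tilde p)-\sigma(S,p^* )|\;\le\;\sum_{v\in V\setminus S}\ \sum_{u\in V[S,v]}\mathbb{E}\Bigl[\sum_{j=1}^{J_u}\bigl|X_{j,u}^\top(\tilde\theta_u-\theta^*_u)\bigr|\Bigr],$$ where the expectation is over the cascade.
   Context: $G=(V,E)$ is a directed graph with $n=|V|$; each edge $e$ has probability $p(e)\in[0,1]$. For $v\in V$, $N(v)$ is the set of in-neighbours, $d_v=|N(v)|$, $E_v$ the incoming edges, and for $E'\subseteq E_v$, $\chi(E')\in\{0,1\}^{d_v}$ is its indicator vector; $\theta_u=(\theta(e))_{e\in E_u}$. IC model with seed set $S_0$: $S_{-1}=\emptyset$; for $\tau\ge1$, $S_\tau$ is $S_{\tau-1}$ together with each $v\notin S_{\tau-1}$ activated, where each $u\in N(v)\cap(S_{\tau-1}\setminus S_{\tau-2})$ independently activates $v$ with probability $p(e_{uv})$. $\sigma(S,p)=\mathbb{E}[|S_{n-1}|]$ when $S_0=S$ under edge probabilities $p$. Relevance: given $S$ and $v\in V\setminus S$, a node $u\in V\setminus S$ is relevant to $v$ if some directed path from a node of $S$ to $v$ contains $u$;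 $V[S,v]$ is the set of such nodes. Economical data-pair construction: for $u\notin S_0$, scan $\tau=0,1,\dots$; whenever $u\notin S_\tau$ and $A_\tau:=(S_\tau\setminus S_{\tau-1})\cap N(u)\neq\emptyset$, record $(\chi(\{e_{wu}:w\in A_\tau\}),\mathbf 1\{u\in S_{\tau+1}\})$; stop after $u$ becomes active. These are $(X_{j,u},Y_{j,u})$, $1\le j\le J_u$ (with $J_u=0$ if no pair arises). *)

(* Defs.v *)
From HB Require Import structures.
From mathcomp Require Import all_boot all_order all_algebra.
From mathcomp Require Import boolp reals exp.
Set Implicit Arguments. Unset Strict Implicit. Unset Printing Implicit Defensive.
Import Order.TTheory GRing.Theory Num.Theory.
Local Open Scope ring_scope.

Section IC.
Variables (R : realType) (V : finType) (E : rel V).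
(* E u v : there is a directed edge e_{uv} from u to v. *)

Definition edgeset : {set V * V} := [set e | E e.1 e.2].

Definition theta (p : V -> V -> R) (u v : V) : R := - ln (1 - p u v).

(* An outcome of the independent edge trials: the set of edges whose
   (single) activation attempt succeeds. *)
Definition cfg_weight (p : V -> V -> R) (w : {set V * V}) : R :=
  \prod_(e in edgeset) (if e \in w then p e.1 e.2 else 1 - p e.1 e.2).

Definition expect (p : V -> V -> R) (f : {set V * V} -> R) : R :=
  \sum_(w : {set V * V} | w \subset edgeset) cfg_weight p w * f w.

Definition ic_step (w : {set V * V}) (prev cur : {set V}) : {set V} :=
  cur :|: [set v | (v \notin cur) &&
             [exists u, [&& u \in cur :\: prev, E u v & (u, v) \in w]]].

(* cascade_pair w S0 t = (S_{t-1}, S_t), with S_{-1} = set0 *)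
Fixpoint cascade_pair (w : {set V * V}) (S0 : {set V}) (t : nat)
  : {set V} * {set V} :=
  match t with
  | 0 => (set0, S0)
  | t'.+1 => let pr := cascade_pair w S0 t' in (pr.2, ic_step w pr.1 pr.2)
  end.

Definition cascade (w : {set V * V}) (S0 : {set V}) (t : nat) : {set V} := (cascade_pair w S0 t).2.
Definition newly (w : {set V * V}) (S0 : {set V}) (t : nat) : {set V} :=
  (cascade_pair w S0 t).2 :\: (cascade_pair w S0 t).1.

Definition sigma (p : V -> V -> R) (S : {set V}) : R :=
  expect p (fun w => (#|cascade w S #|V|.-1|)%:R).

Definition Aset (w : {set V * V}) (S0 : {set V}) (u : V) (t : nat) : {set V} := newly w S0 t :&: [set x | E x u].

(* Economical data pairs of node u: (A_t, 1{u in S_{t+1}}) for the scanned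
   t = 0 .. n-2 with u ∉ S_t and A_t nonempty; the first component is
   encoded by its set of in-neighbours, i.e. chi({e_{wu} : w in A_t}). *)
Definition data_pairs (w : {set V * V}) (S0 : {set V}) (u : V) : seq ({set V} * bool) :=
  if u \in S0 then [::] else
  [seq (Aset w S0 u t, u \in cascade w S0 t.+1)
     | t <- iota 0 #|V|.-1 & (u \notin cascade w S0 t) && (Aset w S0 u t != set0)].

(* indicator vector entry of edge e_{xu} *)
Definition chi (A : {set V}) (x : V) : R := (x \in A)%:R.

Definition xdot (A : {set V}) (th : V -> V -> R) (u : V) : R :=
  \sum_(x | E x u) chi A x * th x u.

Definition relevant (S : {set V}) (v u : V) : Prop :=
  u \notin S /\
  exists (s : V) (q : seq V),
    [/\ s \in S, path E s q, uniq (s :: q), last s q = v & u \in s :: q].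

Definition relset (S : {set V}) (v : V) : {set V} :=
  [set u | `[< relevant S v u >]].

End IC.

(* Main.v *)
Require Import Defs.
From HB Require Import structures.
From mathcomp Require Import all_boot all_order all_algebra.
From mathcomp Require Import boolp reals exp.
From mathcomp Require Import sequences ring lra.
Import Order.TTheory GRing.Theory Num.Theory.
Local Open Scope ring_scope.

Module P1.
Set Implicit Arguments. Unset Strict Implicit. Unset Printing Implicit Defensive.

Section Eb.
Variables (R : realType) (T : finType).
Implicit Types (q : T -> R) (D B : {set T}) (h : {set T} -> R).

Definition wt q D B : R := \prod_(x in D) (if x \in B then q x else 1 - q x).
Definition Eb q D h : R := \sum_(B : {set T} | B \subset D) wt q D B * h B.

Lemma set_ind (P : {set T} -> Prop) : P set0 ->
  (forall x D, x \notin D -> P D -> P (x |: D)) -> forall D, P D.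
Proof.
move=> P0 PS D; move: {2}#|D| (erefl #|D|) => n; elim: n D => [|n IH] D cD.
  by move/eqP: cD; rewrite cards_eq0 => /eqP ->.
case: (set_0Vmem D) => [->//|[x xD]].
rewrite -(setD1K xD); apply: PS; first by rewrite !inE eqxx.
by apply: IH; move: cD; rewrite (cardsD1 x) xD add1n => -[].
Qed.

Lemma Eb0 q h : Eb q set0 h = h set0.
Proof.
rewrite /Eb (big_pred1 set0); last by move=> B; rewrite /= subset0.
by rewrite /wt big_set0 mul1r.
Qed.

Lemma sum_subsetU1 (F : {set T} -> R) x D : x \notin D ->
  \sum_(B : {set T} | B \subset x |: D) F B =
  \sum_(B : {set T} | B \subset D) F B + \sum_(B : {set T} | B \subset D) F (x |: B).
Proof.
move=> xD; rewrite (bigID (fun B => x \in B)) /= addrC; congr (_ + _).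
  apply: eq_bigl => B; apply/idP/idP.
    case/andP=> sB xB; apply/subsetP=> y yB; move: (subsetP sB y yB).
    rewrite !inE; case/orP=> // /eqP yx; by rewrite -yx yB in xB.
  move=> sB; rewrite (subset_trans sB (subsetU1 _ _)) /=.
  by apply/negP=> xB; rewrite (subsetP sB _ xB) in xD.
rewrite (reindex_onto (fun B => x |: B) (fun B => B :\ x)) /=; last first.
  by move=> B /andP[_ xB]; rewrite setD1K.
apply: eq_bigl => B; apply/idP/idP.
  case/andP=> /andP[sB _] /eqP eB.
  have xB : x \notin B by rewrite -eB !inE eqxx.
  apply/subsetP=> y yB; move: (subsetP sB y); rewrite !inE yB orbT => /(_ isT).
  by case/orP=> // /eqP yx; rewrite -yx yB in xB.
move=> sB; have xB : x \notin B by apply/negP=> xB; rewrite (subsetP sB _ xB) in xD.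
by rewrite setUS //= setU11 setU1K // eqxx.
Qed.

Lemma EbU1 q h x D : x \notin D ->
  Eb q (x |: D) h = q x * Eb q D (fun B => h (x |: B)) + (1 - q x) * Eb q D h.
Proof.
move=> xD; rewrite /Eb sum_subsetU1 // addrC !mulr_sumr; congr (_ + _).
  apply: eq_bigr => B sB; rewrite /wt big_setU1 //= setU11 mulrA; congr (_ * _ * _).
  apply: eq_bigr => y yD; rewrite !inE; case: (y =P x) => [yx|//].
  by rewrite -yx yD in xD.
apply: eq_bigr => B sB; rewrite /wt big_setU1 //= mulrA.
have -> : (x \in B) = false by apply/negP=> xB; rewrite (subsetP sB _ xB) in xD.
by [].
Qed.

Lemma Eb_const q D c : Eb q D (fun _ => c) = c.
Proof.
elim/set_ind: D => [|x D xD IH]; first by rewrite Eb0.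
rewrite EbU1 // !IH; ring.
Qed.

Lemma Eb_ext q D h1 h2 : (forall B, B \subset D -> h1 B = h2 B) -> Eb q D h1 = Eb q D h2.
Proof. by move=> H; apply: eq_bigr => B sB; rewrite H. Qed.

Lemma Eb_extq q1 q2 D h : (forall x, x \in D -> q1 x = q2 x) -> Eb q1 D h = Eb q2 D h.
Proof.
move=> H; apply: eq_bigr => B _; congr (_ * _); apply: eq_bigr => x xD; by rewrite H.
Qed.

Lemma EbD q D h1 h2 : Eb q D (fun B => h1 B + h2 B) = Eb q D h1 + Eb q D h2.
Proof. by rewrite /Eb -big_split; apply: eq_bigr => B _; rewrite mulrDr. Qed.

Lemma EbB q D h1 h2 : Eb q D (fun B => h1 B - h2 B) = Eb q D h1 - Eb q D h2.
Proof. by rewrite /Eb -sumrB; apply: eq_bigr => B _; rewrite mulrBr. Qed.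

Lemma Eb_sum (I : Type) (r : seq I) (Pi : pred I) q D (F : I -> {set T} -> R) :
  Eb q D (fun B => \sum_(i <- r | Pi i) F i B) = \sum_(i <- r | Pi i) Eb q D (F i).
Proof.
rewrite /Eb (eq_bigr (fun B => \sum_(i <- r | Pi i) wt q D B * F i B)); last first.
  by move=> B _; rewrite mulr_sumr.
by rewrite exchange_big.
Qed.

Lemma Eb_split q D1 D2 h : (forall x, x \in D1 -> x \notin D2) ->
  Eb q (D1 :|: D2) h = Eb q D1 (fun B1 => Eb q D2 (fun B2 => h (B1 :|: B2))).
Proof.
elim/set_ind: D1 h => [|x D1 xD1 IH] h dis.
  by rewrite set0U Eb0; apply: Eb_ext => B _; rewrite set0U.
have xD2 : x \notin D2 by apply: dis; rewrite setU11.
have dis' : forall y, y \in D1 -> y \notin D2 by move=> y yD; apply: dis; rewrite !inE yD orbT.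
rewrite -setUA EbU1; last by rewrite !inE negb_or xD1 xD2.
rewrite !IH // EbU1 //; congr (_ * _ + _).
by apply: Eb_ext => B _; apply: Eb_ext => B2 _; rewrite setUA.
Qed.

Lemma Eb_tower q D D1 h (Phi : {set T} -> {set T} -> R) : D1 \subset D ->
  (forall B1 B1' B2, B1 \subset D1 -> B1' \subset D1 -> B2 \subset D :\: D1 ->
     h (B1 :|: B2) = Phi B1 (B1' :|: B2)) ->
  Eb q D h = Eb q D1 (fun B1 => Eb q D (Phi B1)).
Proof.
move=> sD1 H.
have eD : D = D1 :|: (D :\: D1).
  by apply/setP=> x; rewrite !inE; case: (boolP (x \in D1)) => // /(subsetP sD1) ->.
have dis : forall x, x \in D1 -> x \notin D :\: D1 by move=> x xD; rewrite !inE xD.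
have E1 : forall g, Eb q D g = Eb q D1 (fun B1 => Eb q (D :\: D1) (fun B2 => g (B1 :|: B2))).
  by move=> g; rewrite [in LHS]eD Eb_split.
rewrite E1; apply: Eb_ext => B1 sB1; rewrite E1.
rewrite -(Eb_const q D1 (Eb q (D :\: D1) (fun B2 => h (B1 :|: B2)))).
by apply: Eb_ext => B1' sB1'; apply: Eb_ext => B2 sB2; rewrite (H B1 B1').
Qed.

Lemma Eb_empty q D a b : Eb q D (fun B => if B == set0 then a else b) =
  (\prod_(x in D) (1 - q x)) * a + (1 - \prod_(x in D) (1 - q x)) * b.
Proof.
elim/set_ind: D => [|x D xD IH]; first by rewrite Eb0 eqxx big_set0; ring.
rewrite EbU1 // IH big_setU1 //=.
rewrite (@Eb_ext q D _ (fun _ => b)) ?Eb_const; first ring.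
move=> B _; have -> : (x |: B == set0) = false.
  by apply/negP=> /eqP/setP/(_ x); rewrite !inE eqxx.
by [].
Qed.

Section Pos.
Variables (q : T -> R) (D : {set T}).
Hypothesis hq : forall x, x \in D -> 0 <= q x <= 1.

Lemma wt_ge0 B : 0 <= wt q D B.
Proof.
apply: prodr_ge0 => x xD; case/andP: (hq xD) => h0 h1.
by case: (x \in B) => //; rewrite subr_ge0.
Qed.

Lemma Eb_le h1 h2 : (forall B, B \subset D -> h1 B <= h2 B) -> Eb q D h1 <= Eb q D h2.
Proof. by move=> H; apply: ler_sum => B sB; rewrite ler_wpM2l ?wt_ge0 ?H. Qed.

Lemma Eb_norm h : `|Eb q D h| <= Eb q D (fun B => `|h B|).
Proof.
apply: le_trans (ler_norm_sum _ _ _) _; apply: ler_sum => B _.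
by rewrite normrM ger0_norm ?wt_ge0.
Qed.

Lemma Eb_01 h : (forall B, B \subset D -> 0 <= h B <= 1) -> 0 <= Eb q D h <= 1.
Proof.
move=> H; apply/andP; split.
  by rewrite -(Eb_const q D 0); apply: Eb_le => B /H /andP[].
by rewrite -(Eb_const q D 1); apply: Eb_le => B /H /andP[].
Qed.

Lemma prod01 (P : pred T) : 0 <= \prod_(x in D | P x) (1 - q x) <= 1.
Proof.
apply/andP; split.
  by apply: prodr_ge0 => x /andP[/hq /andP[_ h1] _]; rewrite subr_ge0.
apply: prodr_ile1 => x /andP[/hq /andP[h0 h1] _]; rewrite subr_ge0 h1 /=.
by rewrite lerBlDr lerDl.
Qed.

End Pos.
End Eb.

End P1.
Import P1.

Module P2.
Set Implicit Arguments. Unset Strict Implicit. Unset Printing Implicit Defensive.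

Section GTV.
Variables (R : realType) (T T' : finType) (pi : T -> T') (q1 q2 : T -> R) (R' : {set T'}).

Definition tD (D : {set T}) (y : T') : R :=
  `|\prod_(x in D | pi x == y) (1 - q1 x) - \prod_(x in D | pi x == y) (1 - q2 x)|.

Lemma setU_D1 (Y B : {set T'}) y : y \notin Y -> Y :|: (B :\ y) = (Y :|: B) :\ y.
Proof.
move=> yY; apply/setP=> z; rewrite !inE; case: (z =P y) => [->|] //=.
by rewrite (negbTE yY).
Qed.

Lemma gTV n : forall (D : {set T}) (g : {set T'} -> R), (#|pi @: D| <= n)%N ->
  (forall x, x \in D -> 0 <= q1 x <= 1) -> (forall x, x \in D -> 0 <= q2 x <= 1) ->
  (forall B, 0 <= g B <= 1) ->
  (forall y (B : {set T'}), y \in pi @: D -> y \notin R' -> B \subset pi @: D -> g (y |: B) = g (B :\ y)) ->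
  `|Eb q1 D (fun B => g (pi @: B)) - Eb q2 D (fun B => g (pi @: B))|
    <= \sum_(y in pi @: D :&: R') tD D y.
Proof.
elim: n => [|n IH] D g cD h1 h2 hg hinv.
  have -> : D = set0.
    apply/setP=> x; rewrite inE; apply/negP=> xD.
    by move: cD; rewrite leqn0 cards_eq0 => /eqP/setP/(_ (pi x)); rewrite inE imset_f.
  by rewrite !Eb0 subrr normr0 sumr_ge0 // => y _; exact: normr_ge0.
case: (set_0Vmem D) => [->|[x0 x0D]].
  by rewrite !Eb0 subrr normr0 sumr_ge0 // => y _; exact: normr_ge0.
set y := pi x0.
set F := [set x in D | pi x == y].
set D' := D :\: F.
have yD : y \in pi @: D by rewrite imset_f.
have eD : D = F :|: D'.
  by apply/setP=> x; rewrite !inE; case: (x \in D); case: (pi x == y).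
have dis : forall x, x \in F -> x \notin D' by move=> x; rewrite !inE => ->.
have sD' : D' \subset D by apply: subsetDl.
have piD' : pi @: D' = (pi @: D) :\ y.
  apply/setP=> z; apply/imsetP/idP.
    case=> x; rewrite !inE negb_and => /andP[/orP[/negbTE xD|pxy] xD'] ->; first by rewrite xD in xD'.
    by rewrite pxy imset_f.
  rewrite !inE => /andP[zy /imsetP[x xD zx]]; exists x => //.
  by rewrite !inE xD -zx (negbTE zy).
have cD' : (#|pi @: D'| <= n)%N.
  by move: cD; rewrite piD' (cardsD1 y) yD add1n ltnS.
pose phi (q : T -> R) (Y : {set T'}) := Eb q D' (fun B2 => g (Y :|: pi @: B2)).
have dec : forall q, Eb q D (fun B => g (pi @: B)) =
    (\prod_(x in F) (1 - q x)) * phi q set0 + (1 - \prod_(x in F) (1 - q x)) * phi q [set y].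
  move=> q; rewrite [in LHS]eD Eb_split // -Eb_empty; apply: Eb_ext => B1 sB1.
  rewrite /phi; case: eqP => [->|/eqP B1n0]; apply: Eb_ext => B2 _; rewrite imsetU.
    by rewrite imset0.
  congr (g (_ :|: _)); apply/setP=> z; rewrite inE; apply/imsetP/eqP.
    by case=> x /(subsetP sB1); rewrite !inE => /andP[_ /eqP <-] ->.
  move=> ->; case/set0Pn: B1n0 => x xB1; exists x => //.
  by move/(subsetP sB1): xB1; rewrite !inE => /andP[_ /eqP ->].
have hphi : forall q Y, (forall x, x \in D -> 0 <= q x <= 1) -> 0 <= phi q Y <= 1.
  move=> q Y hq; apply: Eb_01 => [x xD|B _]; [exact: hq (subsetP sD' x xD)| exact: hg].
have IHY : forall Y : {set T'}, Y \subset [set y] ->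
    `|phi q1 Y - phi q2 Y| <= \sum_(y' in pi @: D' :&: R') tD D' y'.
  move=> Y sY; apply: (IH D' (fun B => g (Y :|: B))) => //.
  - by move=> x xD; apply: h1; apply: (subsetP sD').
  - by move=> x xD; apply: h2; apply: (subsetP sD').
  - move=> y' B y'D y'R sB.
    have y'y : y' != y by move: y'D; rewrite piD' !inE => /andP[].
    have y'Y : y' \notin Y by apply/negP=> /(subsetP sY); rewrite inE (negbTE y'y).
    rewrite setUCA setU_D1 //; apply: hinv => //.
      by move: y'D; rewrite piD' => /setD1P[].
    rewrite subUset; apply/andP; split.
      by apply: subset_trans sY _; rewrite sub1set.
    by apply: subset_trans sB _; rewrite piD' subD1set.
have tDeq : forall y', y' != y -> tD D' y' = tD D y'.
  move=> y' y'y; rewrite /tD; congr (`|_ - _|); apply: eq_bigl => x; rewrite !inE;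
  by case: (pi x =P y') => [->|_]; rewrite ?andbF // (negbTE y'y) /=; case: (x \in D).
have sumeq : \sum_(y' in pi @: D' :&: R') tD D' y' = \sum_(y' in pi @: D :&: R' | y' != y) tD D y'.
  rewrite big_mkcond [RHS]big_mkcond /=; apply: eq_bigr => y' _.
  rewrite piD' !inE; case: (y' =P y) => [->|/eqP y'y] /=; first by rewrite !andbF ?eqxx /= ?andbF.
  by rewrite tDeq // andbT.
rewrite !dec.
set Q1 := \prod_(x in F) (1 - q1 x); set Q2 := \prod_(x in F) (1 - q2 x).
have hQ2 : 0 <= Q2 <= 1.
  rewrite /Q2 (eq_bigl (fun x => (x \in D) && (pi x == y))); last by move=> x; rewrite !inE.
  exact: prod01.
have tDy : tD D y = `|Q1 - Q2|.
  rewrite /tD /Q1 /Q2; congr (`|_ - _|); apply: eq_bigl => x; by rewrite !inE.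
set S' := \sum_(y' in pi @: D' :&: R') tD D' y'.
have I0 := IHY set0 (sub0set _); have I1 := IHY [set y] (subxx _).
rewrite -/S' in I0 I1.
have -> : Q1 * phi q1 set0 + (1 - Q1) * phi q1 [set y] - (Q2 * phi q2 set0 + (1 - Q2) * phi q2 [set y])
   = (Q1 - Q2) * (phi q1 set0 - phi q1 [set y]) + (Q2 * (phi q1 set0 - phi q2 set0)
      + (1 - Q2) * (phi q1 [set y] - phi q2 [set y])) by ring.
have Hrest : `|Q2 * (phi q1 set0 - phi q2 set0) + (1 - Q2) * (phi q1 [set y] - phi q2 [set y])| <= S'.
  apply: le_trans (ler_normD _ _) _; rewrite !normrM.
  case/andP: hQ2 => q20 q21.
  rewrite (ger0_norm q20) (ger0_norm (_ : 0 <= 1 - Q2)); last by rewrite subr_ge0.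
  have := ler_wpM2l q20 I0; have := ler_wpM2l (_ : 0 <= 1 - Q2) I1.
  rewrite subr_ge0 => /(_ q21) => Ha Hb.
  lra.
apply: le_trans (ler_normD _ _) _; rewrite normrM.
case: (boolP (y \in R')) => yR.
  rewrite (bigD1 y) /=; last by rewrite !inE yD yR.
  rewrite -sumeq -/S' tDy; apply: lerD => //.
  rewrite -[X in _ <= X]mulr1; apply: ler_wpM2l; first exact: normr_ge0.
  have := hphi q1 set0 h1; have := hphi q1 [set y] h1.
  move=> /andP[a0 a1] /andP[b0 b1]; rewrite ler_norml; apply/andP; split; lra.
have -> : phi q1 set0 - phi q1 [set y] = 0.
  apply/eqP; rewrite subr_eq0; apply/eqP; apply: Eb_ext => B2 sB2.
  have yB2 : y \notin pi @: B2.
    apply/imsetP=> -[x xB2 yx]; move: (subsetP sB2 x xB2); rewrite !inE -yx eqxx.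
    by case: (x \in D).
  rewrite set0U hinv //.
  - congr g; apply/setP=> z; rewrite !inE; case: (z =P y) => [->|] //=.
    by rewrite (negbTE yB2).
  - by apply: imsetS; apply: subset_trans sB2 sD'.
rewrite normr0 mulr0 add0r; apply: le_trans Hrest _; rewrite /S' sumeq.
rewrite le_eqVlt; apply/orP; left; apply/eqP; apply: eq_bigl => y'.
rewrite !inE; case: (y' =P y) => [->|]; by rewrite ?(negbTE yR) ?andbF ?andbT.
Qed.
End GTV.

End P2.
Import P2.

Module P3.
Set Implicit Arguments. Unset Strict Implicit. Unset Printing Implicit Defensive.

Section Graph.
Variables (V : finType) (E : rel V) (S : {set V}).
Implicit Types (P C : {set V}) (w : {set V * V}) (pr : {set V} * {set V}).

Definition stepP (w : {set V * V}) (pr : {set V} * {set V}) := (pr.2, ic_step E w pr.1 pr.2).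
Definition run w pr k := iter k (stepP w) pr.

Lemma runS w pr k : run w pr k.+1 = run w (stepP w pr) k.
Proof. exact: iterSr. Qed.

Lemma cascade_pair_run w S0 t : cascade_pair E w S0 t = run w (set0, S0) t.
Proof. by elim: t => //= t ->. Qed.

Lemma ic_step_sub w P C : C \subset ic_step E w P C.
Proof. exact: subsetUl. Qed.

Lemma run_mono w pr k : pr.2 \subset (run w pr k).2.
Proof.
elim: k => [|k IH] //=; apply: subset_trans IH _; exact: ic_step_sub.
Qed.

Lemma ic_step_loc w w' P C : (forall a b, a \in C :\: P -> ((a, b) \in w) = ((a, b) \in w')) ->
  ic_step E w P C = ic_step E w' P C.
Proof.
move=> H; rewrite /ic_step; congr (_ :|: _); apply/setP=> z; rewrite !inE; congr (_ && _).
apply: eq_existsb => a; case aC: (a \in C :\: P) => //=; by rewrite H.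
Qed.

Lemma run_loc k w w' P C : P \subset C ->
  (forall a b, a \notin P -> ((a, b) \in w) = ((a, b) \in w')) -> run w (P, C) k = run w' (P, C) k.
Proof.
elim: k P C => [|k IH] P C sPC H //.
rewrite !runS /stepP /= (@ic_step_loc w w'); last first.
  by move=> a b; rewrite inE => /andP[aP _]; apply: H.
apply: IH; first exact: ic_step_sub.
move=> a b aC; apply: H; apply/negP=> aP; by rewrite (subsetP sPC a aP) in aC.
Qed.

Lemma sim_sub w (K N0 Pa Ca Pb Cb : {set V}) :
  (forall x z, x \in K -> E x z -> z \notin N0 -> z \in K) -> N0 \subset Ca ->
  Pa :\: K = Pb :\: K -> Ca :\: K = Cb :\: K ->
  ic_step E w Pa Ca :\: K \subset ic_step E w Pb Cb :\: K.
Proof.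
move=> cl sN eP eC.
have hC : forall t, t \notin K -> (t \in Ca) = (t \in Cb).
  by move=> t tK; move/setP: eC => /(_ t); rewrite !inE tK.
have hP : forall t, t \notin K -> (t \in Pa) = (t \in Pb).
  by move=> t tK; move/setP: eP => /(_ t); rewrite !inE tK.
apply/subsetP=> z; rewrite /ic_step !inE => /andP[zK /orP[zCa|/andP[zCa /existsP[x /and3P[xn Exz xzw]]]]].
  by rewrite zK -hC // zCa.
rewrite zK /=; apply/orP; right; rewrite -hC // zCa /=.
have xK : x \notin K.
  apply/negP=> xK; have zN : z \notin N0 by apply/negP=> zN; rewrite (subsetP sN z zN) in zCa.
  by rewrite (cl x z xK Exz zN) in zK.
apply/existsP; exists x; rewrite Exz xzw !andbT.
by move: xn; rewrite !inE -hC // -hP.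
Qed.

Lemma sim_run w (K N0 : {set V}) :
  (forall x z, x \in K -> E x z -> z \notin N0 -> z \in K) -> forall k (Pa Ca Pb Cb : {set V}),
  N0 \subset Ca -> N0 \subset Cb ->
  Pa :\: K = Pb :\: K -> Ca :\: K = Cb :\: K ->
  (run w (Pa, Ca) k).2 :\: K = (run w (Pb, Cb) k).2 :\: K.
Proof.
move=> cl; elim=> [|k IH] Pa Ca Pb Cb sa sb eP eC //.
rewrite !runS /stepP /=; apply: IH => //.
- by apply: subset_trans sa _; exact: ic_step_sub.
- by apply: subset_trans sb _; exact: ic_step_sub.
- apply/eqP; rewrite eqEsubset; apply/andP; split; apply: (@sim_sub w K N0) => //.
  all: by [rewrite eP | rewrite eC].
Qed.

Definition good (C : {set V}) := S \subset C /\ forall c, c \in C ->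
  exists s q, [/\ s \in S, path E s q, uniq (s :: q), last s q = c & all (fun t => t \in C) (s :: q)].

Lemma good0 : good S.
Proof. split=> // c cS; exists c, [::]; by rewrite /= cS. Qed.

Lemma good_step w P C : good C -> good (ic_step E w P C).
Proof.
case=> sS hC; split; first by apply: subset_trans sS (ic_step_sub _ _ _).
move=> c; rewrite /ic_step inE => /orP[cC|].
  case: (hC c cC) => s [q [sS' pq uq lq aq]]; exists s, q; split=> //.
  by apply: sub_all aq => t tC; apply: (subsetP (ic_step_sub w P C)).
rewrite inE => /andP[cC /existsP[x /and3P[xn Exc xcw]]].
have xC : x \in C by move: xn; rewrite inE => /andP[].
case: (hC x xC) => s [q [sS' pq uq lq aq]]; exists s, (rcons q c); split=> //.
- by rewrite rcons_path pq lq.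
- rewrite -rcons_cons rcons_uniq uq andbT; apply/negP=> cq.
  by move/allP: aq => /(_ c cq); rewrite (negbTE cC).
- by rewrite last_rcons.
- rewrite -rcons_cons all_rcons; apply/andP; split.
    rewrite /ic_step inE; apply/orP; right; rewrite inE (negbTE cC) /=.
    by apply/existsP; exists x; rewrite xn Exc.
  by apply: sub_all aq => t tC; apply: (subsetP (ic_step_sub w P C)).
Qed.

Lemma path_restr (N0 : {set V}) x p :
  path (fun a b => E a b && (b \notin N0)) x p -> path E x p && all (fun t => t \notin N0) p.
Proof.
elim: p x => [|z p IH] x //= /andP[/andP[Exz zN] pth].
by case/andP: (IH z pth) => -> ->; rewrite Exz zN.
Qed.

Lemma notK (C N0 : {set V}) y c v : good C -> C \subset N0 -> y \notin N0 -> c \in C -> E c y ->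
  y \notin relset E S v -> ~~ connect (fun a b => E a b && (b \notin N0)) y v.
Proof.
move=> [sS hC] sCN yN cC Ecy yR; apply/negP => /connectP [p pth vl].
move: yR; rewrite vl; case/shortenP: pth => p' pth' uq' _.
case/path_restr/andP: pth' => pE aN.
case: (hC c cC) => s [qs [sS0 pqs uqs lqs aqs]].
rewrite inE => /negP; apply; apply/asboolP; split.
  by apply/negP => yS; rewrite (subsetP sCN y (subsetP sS y yS)) in yN.
exists s, (qs ++ y :: p'); split => //.
- by rewrite cat_path pqs lqs /= Ecy pE.
- rewrite -cat_cons cat_uniq uqs uq' andbT andTb; apply/hasPn => t tin.
  have tN : t \notin N0.
    by move: tin; rewrite inE => /orP[/eqP ->|tp] //; exact: (allP aN).
  apply/negP => ts; have tC := allP aqs t ts.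
  by rewrite (subsetP sCN t tC) in tN.
- by rewrite last_cat lqs.
- by rewrite inE mem_cat inE eqxx !orbT.
Qed.

Lemma fv_inv w k C (B : {set V}) y c v : good C -> c \in C -> E c y -> y \notin C ->
  y \notin relset E S v ->
  (v \in (run w (C, C :|: (y |: B)) k).2) = (v \in (run w (C, C :|: (B :\ y)) k).2).
Proof.
move=> gC cC Ecy yC yR.
set N0 := (C :|: B) :\ y.
set K := [set z | connect (fun a b => E a b && (b \notin N0)) y z].
have cl : forall x z, x \in K -> E x z -> z \notin N0 -> z \in K.
  move=> x z xK Exz zN; rewrite inE; move: xK; rewrite inE => xK; apply: connect_trans xK (connect1 _).
  by rewrite /= Exz zN.
have yK : y \in K by rewrite inE connect0.
have sCN : C \subset N0.
  apply/subsetP => t tC; rewrite !in_setD1 !in_setU tC andbT.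
  by apply/negP=> /eqP ty; rewrite -ty tC in yC.
have yN : y \notin N0 by rewrite in_setD1 eqxx.
have vK : v \notin K by rewrite inE; exact: (notK gC sCN yN cC Ecy yR).
have sa : N0 \subset C :|: (y |: B).
  apply/subsetP => t; rewrite !inE => /andP[_ /orP[->|->]] //.
  by rewrite !orbT.
have sb : N0 \subset C :|: (B :\ y).
  apply/subsetP => t; rewrite !inE => /andP[ty /orP[->|->]] //.
  by rewrite ty orbT.
have eC : (C :|: (y |: B)) :\: K = (C :|: (B :\ y)) :\: K.
  apply/setP=> t; rewrite !in_setD !in_setU in_set1 in_setD1.
  by case: (t =P y) => [->|] //=; rewrite yK.
have := @sim_run w K N0 cl k C (C :|: (y |: B)) C (C :|: (B :\ y)) sa sb (erefl _) eC.
by move/setP/(_ v); rewrite !in_setD (negbTE vK).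
Qed.

End Graph.

End P3.
Import P3.

Module P4.
Set Implicit Arguments. Unset Strict Implicit. Unset Printing Implicit Defensive.

Section Analytic.
Variables (R : realType).

Lemma expR_lip (a b : R) : 0 <= a -> 0 <= b -> `|expR (- a) - expR (- b)| <= `|a - b|.
Proof.
wlog ab : a b / a <= b.
  move=> H a0 b0; case: (leP a b) => [ab|/ltW ba]; first exact: H.
  by rewrite distrC [X in _ <= X]distrC; apply: H.
move=> a0 b0.
have e1 : expR (- b) = expR (- a) * expR (a - b) by rewrite -expRD; congr expR; ring.
have e2 := expR_ge1Dx (a - b).
have e3 : expR (- a) <= 1 by rewrite expR_le1 oppr_le0.
have e4 := expR_gt0 (- a).
have e5 : expR (a - b) <= 1 by rewrite expR_le1 subr_le0.
rewrite e1 ger0_norm; last first.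
  by rewrite subr_ge0 -[X in _ <= X]mulr1 ler_wpM2l // ltW.
rewrite distrC ger0_norm ?subr_ge0 //.
nra.
Qed.
End Analytic.

Section Main.
Variables (R : realType) (V : finType) (E : rel V) (S : {set V}) (pt ps : V -> V -> R).
Hypothesis hpt : forall u v, E u v -> 0 <= pt u v < 1.
Hypothesis hps : forall u v, E u v -> 0 <= ps u v < 1.
Variable v : V.

Implicit Types (P C : {set V}) (w : {set V * V}) (pr : {set V} * {set V}).

Definition ED := edgeset E.
Definition qp (p : V -> V -> R) : V * V -> R := fun e => p e.1 e.2.
Definition fv k pr w : R := (v \in (run E w pr k).2)%:R.
Definition dth a b := theta pt a b - theta ps a b.
Definition Rv := relset E S v.
Definition Aof pr u := (pr.2 :\: pr.1) :&: [set x | E x u].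
Definition cost pr : R := \sum_(u in Rv) (u \notin pr.2)%:R * `|xdot E (Aof pr u) dth u|.
Definition costs k pr w : R := \sum_(i < k) cost (run E w pr i).
Definition D1of P C := [set e | E e.1 e.2 && (e.1 \in C :\: P)].

Lemma hq (p : V -> V -> R) : (forall u v, E u v -> 0 <= p u v < 1) ->
  forall e, e \in ED -> 0 <= qp p e <= 1.
Proof. by move=> hp e; rewrite inE => /hp /andP[-> /ltW ->]. Qed.

Lemma run_split P C k (B1 B1' B2 : {set V * V}) : B1 \subset D1of P C -> B1' \subset D1of P C ->
  B2 \subset ED :\: D1of P C ->
  run E (B1 :|: B2) (P, C) k.+1 = run E (B1' :|: B2) (C, ic_step E B1 P C) k.
Proof.
move=> s1 s1' s2; rewrite runS /stepP /=.
rewrite (@ic_step_loc _ E (B1 :|: B2) B1); last first.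
  move=> a b aCP; rewrite in_setU; case: (boolP ((a, b) \in B2)) => [/(subsetP s2)|]; last by rewrite orbF.
  rewrite in_setD => /andP[nD Eab]; move: nD; rewrite /D1of in_set /= aCP andbT.
  by move: Eab; rewrite /ED /edgeset in_set /= => ->.
apply: run_loc; first exact: ic_step_sub.
move=> a b aC; rewrite !in_setU.
have h1 : forall B : {set V * V}, B \subset D1of P C -> ((a, b) \in B) = false.
  move=> B sB; apply: negbTE; apply/negP => /(subsetP sB); rewrite /D1of in_set /= => /andP[_].
  by rewrite in_setD => /andP[_ aC']; rewrite aC' in aC.
by rewrite (h1 _ s1) (h1 _ s1').
Qed.

Lemma nf_eq P C (B1 : {set V * V}) : B1 \subset D1of P C -> ic_step E B1 P C = C :|: (snd @: B1).
Proof.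
move=> sB; apply/setP => z; rewrite /ic_step !in_setU; case: (boolP (z \in C)) => //= zC.
rewrite inE zC /=; apply/existsP/imsetP.
  by case=> x /and3P[_ _ xz]; exists (x, z).
case=> -[x z'] xzB /= ->; exists x; rewrite xzB andbT.
by move: (subsetP sB _ xzB); rewrite inE /= => /andP[-> ->].
Qed.

Lemma fiber_sum P C y (F : V -> V -> R) :
  \sum_(e in D1of P C | e.2 == y) F e.1 e.2 = \sum_(x | E x y) @chi R V (Aof (P, C) y) x * F x y.
Proof.
rewrite big_mkcond /= (partition_big fst xpredT) //= [RHS]big_mkcond /=.
apply: eq_bigr => x _.
rewrite (bigD1 (x, y)) //= big1 ?addr0; last first.
  move=> e /andP[ex ne]; case: ifP => // /andP[_ ey]; move: ne.
  by case: e ex ey => a b /= /eqP -> /eqP ->; rewrite eqxx.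
rewrite eqxx /chi /Aof !inE /= andbT.
by case: (E x y); case: (x \in C); case: (x \in P); rewrite /= ?mul1r ?mul0r.
Qed.

Lemma prod_expR (p : V -> V -> R) P C y : (forall u v, E u v -> 0 <= p u v < 1) ->
  \prod_(e in D1of P C | e.2 == y) (1 - qp p e) = expR (- xdot E (Aof (P, C) y) (theta p) y).
Proof.
move=> hp.
rewrite (eq_bigr (fun e => expR (ln (1 - p e.1 e.2)))); last first.
  move=> e /andP[]; rewrite inE => /andP[Ee _] _; rewrite lnK // posrE subr_gt0.
  by case/andP: (hp _ _ Ee).
rewrite -expR_sum (fiber_sum P C y (fun a b => ln (1 - p a b))) /xdot -sumrN; congr expR; apply: eq_bigr => x _.
by rewrite /theta mulrN opprK.
Qed.

Lemma xdot_ge0 (p : V -> V -> R) A y : (forall u v, E u v -> 0 <= p u v < 1) ->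
  0 <= xdot E A (theta p) y.
Proof.
move=> hp; apply: sumr_ge0 => x Exy; apply: mulr_ge0; first by rewrite /chi ler0n.
rewrite /theta oppr_ge0; apply: ln_le0; rewrite lerBlDr lerDl.
by case/andP: (hp _ _ Exy).
Qed.

Lemma tD_le P C y : tD snd (qp pt) (qp ps) (D1of P C) y <= `|xdot E (Aof (P, C) y) dth y|.
Proof.
rewrite /tD !prod_expR //.
have -> : xdot E (Aof (P, C) y) dth y =
   xdot E (Aof (P, C) y) (theta pt) y - xdot E (Aof (P, C) y) (theta ps) y.
  by rewrite /xdot -sumrB; apply: eq_bigr => x _; rewrite /dth mulrBr.
by apply: expR_lip; apply: xdot_ge0.
Qed.

End Main.

End P4.
Import P4.

Module P5.
Set Implicit Arguments. Unset Strict Implicit. Unset Printing Implicit Defensive.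

Section Claim.
Variables (R : realType) (V : finType) (E : rel V) (S : {set V}) (pt ps : V -> V -> R).
Hypothesis hpt : forall u v, E u v -> 0 <= pt u v < 1.
Hypothesis hps : forall u v, E u v -> 0 <= ps u v < 1.
Variable v : V.

Local Notation ED := (ED E).
Local Notation fv := (@P4.fv R V E v).
Local Notation costs := (costs E S pt ps v).
Local Notation cost := (cost E S pt ps v).

Lemma claim k : forall P C, good E S C ->
  `|Eb (qp pt) ED (fv k (P, C)) - Eb (qp ps) ED (fv k (P, C))| <= Eb (qp ps) ED (costs k (P, C)).
Proof.
elim: k => [|k IH] P C gC.
  rewrite (@Eb_ext _ _ (qp ps) ED (costs 0 (P, C)) (fun _ => 0)); last by move=> B _; rewrite /P4.costs big_ord0.
  by rewrite /P4.fv /= !Eb_const subrr normr0.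
set D1 := D1of E P C.
have sD1 : D1 \subset ED.
  by apply/subsetP => e; rewrite /D1 /D1of /P4.ED /edgeset !in_set => /andP[].
set N := fun B1 : {set V * V} => ic_step E B1 P C.
have tow : forall p, Eb (qp p) ED (fv k.+1 (P, C)) =
    Eb (qp p) D1 (fun B1 => Eb (qp p) ED (fv k (C, N B1))).
  move=> p; apply: Eb_tower => // B1 B1' B2 s1 s1' s2.
  by rewrite /P4.fv (run_split _ s1 s1' s2).
have towc : Eb (qp ps) ED (costs k.+1 (P, C)) =
    cost (P, C) + Eb (qp ps) D1 (fun B1 => Eb (qp ps) ED (costs k (C, N B1))).
  rewrite (@Eb_tower _ _ (qp ps) ED D1 (costs k.+1 (P, C))
             (fun B1 w => cost (P, C) + costs k (C, N B1) w)) //; last first.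
    move=> B1 B1' B2 s1 s1' s2; rewrite /P4.costs big_ord_recl /=.
    congr (_ + _); apply: eq_bigr => i _.
  by rewrite add0n -(run_split i s1 s1' s2).
  rewrite (@Eb_ext _ _ (qp ps) D1 _ (fun B1 => cost (P, C) + Eb (qp ps) ED (costs k (C, N B1)))).
    by rewrite EbD Eb_const.
  by move=> B1 _; rewrite EbD Eb_const.
rewrite !tow towc.
set Gt := fun N0 => Eb (qp pt) ED (fv k (C, N0)).
set Gs := fun N0 => Eb (qp ps) ED (fv k (C, N0)).
have hG : forall p N0, (forall u v, E u v -> 0 <= p u v < 1) -> 0 <= Eb (qp p) ED (fv k (C, N0)) <= 1.
  move=> p N0 hp; apply: Eb_01; first exact: hq.
  by move=> B _; rewrite /P4.fv; case: (_ \in _) => /=; rewrite ?ler01 ?lexx.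
have -> : Eb (qp pt) D1 (fun B1 => Gt (N B1)) - Eb (qp ps) D1 (fun B1 => Gs (N B1)) =
   (Eb (qp pt) D1 (fun B1 => Gt (N B1)) - Eb (qp ps) D1 (fun B1 => Gt (N B1)))
   + Eb (qp ps) D1 (fun B1 => Gt (N B1) - Gs (N B1)).
  by rewrite EbB; ring.
apply: le_trans (ler_normD _ _) _; apply: lerD; last first.
  apply: le_trans (Eb_norm _ _) _.
    by move=> e /(subsetP sD1); apply: hq.
  apply: Eb_le; first by move=> e /(subsetP sD1); apply: hq.
  move=> B1 _; apply: IH; exact: good_step.
pose g := fun B : {set V} => Gt (C :|: B).
have eg : forall p, Eb (qp p) D1 (fun B1 => Gt (N B1)) = Eb (qp p) D1 (fun B1 => g (snd @: B1)).
  by move=> p; apply: Eb_ext => B1 sB1; rewrite /N nf_eq.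
rewrite !eg.
apply: le_trans.
  apply: (@gTV R (V * V)%type V snd (qp pt) (qp ps) (Rv E S v :\: C) #|snd @: D1| D1 g (leqnn _)).
  - by move=> e /(subsetP sD1); apply: hq.
  - by move=> e /(subsetP sD1); apply: hq.
  - by move=> B; apply: hG.
  - move=> y B /imsetP [[c y'] eD1 /= ->] yR sB.
    move: eD1; rewrite /D1 /D1of in_set /= => /andP[Ecy cCP].
    have cC : c \in C by move: cCP; rewrite in_setD => /andP[].
    case: (boolP (y' \in C)) => yC.
      rewrite /g; congr Gt; apply/setP => t; rewrite !in_setU in_set1 in_setD1.
      by case: (t =P y') => [->|]; rewrite ?yC ?orbT.
    have yR' : y' \notin Rv E S v by move: yR; rewrite in_setD yC.
    rewrite /g /Gt; apply: Eb_ext => w _.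
    by rewrite /P4.fv (@fv_inv V E S w k C B y' c v gC cC Ecy yC yR').
rewrite /P4.cost big_mkcond [X in _ <= X]big_mkcond /=; apply: ler_sum => y _.
case: (boolP (y \in snd @: D1 :&: (Rv E S v :\: C))) => [|_].
  rewrite !in_setI in_setD => /andP[_ /andP[yC yR]]; rewrite yR yC mul1r.
  exact: tD_le.
by case: (y \in Rv E S v) => //; apply: mulr_ge0; [exact: ler0n| exact: normr_ge0].
Qed.

End Claim.

End P5.
Import P5.


Lemma dp_eq (R : realType) (V : finType) (E : rel V) (S : {set V}) (th : V -> V -> R) w u :
  u \notin S ->
  \sum_(i < #|V|.-1) (u \notin (run E w (set0, S) i).2)%:R * `|xdot E (Aof E (run E w (set0, S) i) u) th u|
  = \sum_(xy <- data_pairs E w S u) `|xdot E xy.1 th u|.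
Proof.
move=> uS; rewrite /data_pairs (negbTE uS) big_map big_filter.
rewrite (_ : iota 0 #|V|.-1 = index_iota 0 #|V|.-1); last by rewrite /index_iota subn0.
rewrite big_mkord [RHS]big_mkcond /=; apply: eq_bigr => t _.
rewrite /Aset /newly /cascade /Aof cascade_pair_run.
case: (u \in _) => /=; first by rewrite mul0r.
rewrite mul1r; case: (boolP (_ == set0)) => [/eqP ->|] //=.
by rewrite /xdot big1 ?normr0 // => x _; rewrite /chi inE mul0r.
Qed.

Theorem lemma1 (R : realType) (V : finType) (E : rel V) (S : {set V})
    (pt ps : V -> V -> R)
    (hpt : forall u v, E u v -> 0 <= pt u v < 1)
    (hps : forall u v, E u v -> 0 <= ps u v < 1) :
  `| sigma E pt S - sigma E ps S |
  <= \sum_(v in ~: S) \sum_(u in relset E S v)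
       expect E ps (fun w =>
         \sum_(xy <- data_pairs E w S u)
           `| xdot E xy.1 (fun a b => theta pt a b - theta ps a b) u |).
Proof.
have expE : forall p f, expect E p f = Eb (qp p) (P4.ED E) f := fun p f => erefl.
have cardS : forall A : {set V}, (#|A|%:R : R) = \sum_u (u \in A)%:R.
  move=> A; rewrite -sum1_card natr_sum big_mkcond /=; apply: eq_bigr => u _.
  by case: (u \in A).
have sig : forall p, sigma E p S = \sum_u Eb (qp p) (P4.ED E) (P4.fv R E u #|V|.-1 (set0, S)).
  move=> p; rewrite /sigma expE -Eb_sum; apply: Eb_ext => w _; rewrite cardS.
  by apply: eq_bigr => u _; rewrite /cascade cascade_pair_run.
rewrite !sig -sumrB (bigID (fun u => u \in S)) /=.
have one : forall p u, u \in S -> Eb (qp p) (P4.ED E) (P4.fv R E u #|V|.-1 (set0, S)) = 1.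
  move=> p u uS; rewrite -(Eb_const (qp p) (P4.ED E) 1); apply: Eb_ext => w _.
  by rewrite /P4.fv; have := run_mono E w (set0, S) #|V|.-1; move/subsetP/(_ u uS) => ->.
rewrite big1 ?add0r; last by move=> u uS; rewrite !one // subrr.
apply: le_trans (ler_norm_sum _ _ _) _.
rewrite [X in _ <= X](eq_bigl (fun u => u \notin S)); last by move=> u; rewrite inE.
apply: ler_sum => u uS.
apply: le_trans (@claim R V E S pt ps hpt hps u #|V|.-1 set0 S (good0 E S)) _.
rewrite le_eqVlt; apply/orP; left; apply/eqP.
rewrite /P4.costs /P4.cost.
rewrite (@Eb_ext _ _ _ _ _ (fun w => \sum_(u' in Rv E S u) \sum_(i < #|V|.-1)
    (u' \notin (run E w (set0, S) i).2)%:R * `|xdot E (Aof E (run E w (set0, S) i) u') (dth pt ps) u'|)); last first.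
  by move=> w _; rewrite exchange_big.
rewrite Eb_sum; apply: eq_bigr => u' uR; rewrite expE; apply: Eb_ext => w _.
have uS' : u' \notin S by move: uR; rewrite inE => /asboolP [].
by rewrite dp_eq.
Qed.
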